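(* Let $\psi\in\mathbf{\Psi}_n$, and $x:=(x_1,\ldots,x_n)\in X^n$ with $|\!|\!|x|\!|\!|_{\psi}=1$. Then $$\partial|\!|\!|\cdot|\!|\!|_\psi(x) = \Big\{(\xi_1 x^*_1,\ldots,\xi_n x^*_n)\mid x^*_i\in\partial\|\cdot\|(x_i)\ (i=1,\ldots,n),\ (\xi_1,\ldots,\xi_n)\in\partial|\!|\!|\cdot|\!|\!|_{\psi}(\nu)\Big\},$$ where $\nu:=(\|x_1\|,\ldots,\|x_n\|)\in\mathbb{R}^n$ and, in $\partial|\!|\!|\cdot|\!|\!|_{\psi}(\nu)$, $|\!|\!|\cdot|\!|\!|_\psi$ denotes the corresponding norm on $\mathbb{R}^n$.
   Context: Let $(X,\|\cdot\|)$ be a normed vector space, $n\ge2$. $\Omega_n:=\{t\in\mathbb{R}^n\mid t_i\ge0,\ \sum_i t_i=1\}$, $\Omega_n^\circ:=\{t\in\Omega_n\mid t_i<1\ \forall i\}$. $\mathbf{\Psi}_n$ is the class of convex continuous $\psi:\Omega_n\to\mathbb{R}$ with (B1) $\psi(\mathbf{e}_i)=1$ for all standard unit vectors $\mathbf{e}_i$ and (B2) $\psi(t)\ge(1-t_i)\psi\big(\frac{t_1}{1-t_i},\ldots,\frac{t_{i-1}}{1-t_i},0,\frac{t_{i+1}}{1-t_i},\ldots,\frac{t_n}{1-t_i}\big)$ for all $t\in\Omega_n^\circ$, $i=1,\ldots,n$. For $\psi\in\mathbf{\Psi}_n$, $|\!|\!|x|\!|\!|_\psi:=\big(\sum_{i}\|x_i\|\big)\,\psi\big(\frac{\|x_1\|}{\sum_{i}\|x_i\|},\ldots,\frac{\|x_n\|}{\sum_{i}\|x_i\|}\big)$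 for $x\ne0$, $|\!|\!|0|\!|\!|_\psi:=0$ (on $\mathbb{R}^n$ take $X=\mathbb{R}$ with absolute value). $\partial$ denotes the convex subdifferential; $(X^n)^*$ is identified with $(X^* )^n$. *)

(* Defs.v *)
From HB Require Import structures.
From mathcomp Require Import all_boot all_order all_algebra.
From mathcomp Require Import all_classical all_reals all_analysis.
Set Implicit Arguments. Unset Strict Implicit. Unset Printing Implicit Defensive.
Import Order.TTheory GRing.Theory Num.Theory.
Import numFieldNormedType.Exports.
Local Open Scope classical_set_scope.
Local Open Scope ring_scope.

Definition Omega {R : realType} (n : nat) : set 'rV[R]_n :=
  [set t | (forall i, 0 <= t 0 i) /\ \sum_(i < n) t 0 i = 1].

Definition Omega_int {R : realType} (n : nat) : set 'rV[R]_n :=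
  [set t | @Omega R n t /\ forall i, t 0 i < 1].

Definition unitv {R : realType} (n : nat) (i : 'I_n) : 'rV[R]_n :=
  \row_j (if j == i then 1 else 0).

Definition PsiClass {R : realType} (n : nat) (psi : 'rV[R]_n -> R) : Prop :=
  (forall s t, @Omega R n s -> @Omega R n t -> forall l : R, 0 <= l <= 1 ->
     psi (l *: s + (1 - l) *: t) <= l * psi s + (1 - l) * psi t) /\
  {within @Omega R n, continuous psi} /\
  (forall i, psi (@unitv R n i) = 1) /\
  (forall t, @Omega_int R n t -> forall i : 'I_n,
     psi t >= (1 - t 0 i) *
       psi (\row_j (if j == i then 0 else t 0 j / (1 - t 0 i)))).

Definition psinorm_of {R : realType} (n : nat) (psi : 'rV[R]_n -> R)
  (v : 'I_n -> R) : R :=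
  let s := \sum_(i < n) v i in
  if s == 0 then 0 else s * psi (\row_i (v i / s)).

Definition psinorm {R : realType} {X : normedModType R} (n : nat)
  (psi : 'rV[R]_n -> R) (x : 'I_n -> X) : R :=
  psinorm_of psi (fun i => `|x i|).

Definition psinormR {R : realType} (n : nat) (psi : 'rV[R]_n -> R)
  (t : 'rV[R]_n) : R :=
  psinorm_of psi (fun i => `|t 0 i|).

Definition is_dual {R : realType} {X : normedModType R} (f : X -> R) : Prop :=
  (forall (a : R) (u v : X), f (a *: u + v) = a * f u + f v) /\ continuous f.

Definition subdiff_norm {R : realType} {X : normedModType R} (x : X)
  : set (X -> R) :=
  [set f | is_dual f /\ forall y : X, f (y - x) <= `|y| - `|x|].

(* Subdifferential of |||.|||_psi on X^n at x, with (X^n)^* identified with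
   (X^* )^n via <(f_i), (y_i)> = sum_i f_i y_i. *)
Definition subdiff_psinorm {R : realType} {X : normedModType R} (n : nat)
  (psi : 'rV[R]_n -> R) (x : 'I_n -> X) : set ('I_n -> X -> R) :=
  [set F | (forall i, is_dual (F i)) /\
     forall y : 'I_n -> X,
       \sum_(i < n) F i (y i - x i) <= psinorm psi y - psinorm psi x].

(* Subdifferential of |||.|||_psi on R^n at t, with (R^n)^* identified with R^n
   via <xi, s> = sum_i xi_i s_i. *)
Definition subdiff_psinormR {R : realType} (n : nat)
  (psi : 'rV[R]_n -> R) (t : 'rV[R]_n) : set 'rV[R]_n :=
  [set xi | forall s : 'rV[R]_n,
     \sum_(i < n) xi 0 i * (s 0 i - t 0 i) <= psinormR psi s - psinormR psi t].

(* Main.v *)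
Require Import Defs.
From HB Require Import structures.
From mathcomp Require Import all_boot all_order all_algebra.
From mathcomp Require Import all_classical all_reals all_analysis.
From mathcomp Require Import lra.
Import Order.TTheory GRing.Theory Num.Theory.
Import numFieldNormedType.Exports.
Local Open Scope classical_set_scope.
Local Open Scope ring_scope.

Section Lin.
Variables (R : realType) (X : normedModType R) (f : X -> R).
Hypothesis hf : is_dual f.

Lemma lin0 : f 0 = 0.
Proof.
have := hf.1 1 0 0; rewrite scale1r addr0 mul1r => h; lra.
Qed.
Lemma linZ a u : f (a *: u) = a * f u.
Proof. by have := hf.1 a u 0; rewrite !addr0 lin0 addr0. Qed.
Lemma linD u v : f (u + v) = f u + f v.
Proof. by have := hf.1 1 u v; rewrite scale1r mul1r. Qed.
Lemma linN u : f (- u) = - f u.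
Proof. by rewrite -scaleN1r linZ mulN1r. Qed.
Lemma linB u v : f (u - v) = f u - f v.
Proof. by rewrite linD linN. Qed.
End Lin.

Lemma subdiff_normP (R : realType) (X : normedModType R) (f : X -> R) x :
  subdiff_norm x f -> [/\ f x = `|x|, forall y, f y <= `|y| & is_dual f].
Proof.
move=> [hf hs].
have ub y : f y <= `|y|.
  have := hs (y + x); rewrite addrK => h.
  have := ler_normD y x; lra.
split => //.
have := hs 0; rewrite sub0r linN // normr0 => h.
have := ub x; lra.
Qed.

Lemma subdiff_normI (R : realType) (X : normedModType R) (f : X -> R) x :
  is_dual f -> f x = `|x| -> (forall y, f y <= `|y|) -> subdiff_norm x f.
Proof.
move=> hf fx ub; split => // y; rewrite linB // fx.
have := ub y; lra.
Qed.

Lemma scal_dual (R : realType) (X : normedModType R) (f : X -> R) c :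
  is_dual f -> is_dual (fun y => c * f y).
Proof.
move=> hf; split.
  by move=> a u v; rewrite hf.1 mulrDr mulrCA.
move=> y; apply: continuousM; [exact: cst_continuous | exact: hf.2].
Qed.

Section Psi.
Variables (R : realType) (n : nat) (psi : 'rV[R]_n -> R).

Lemma psinorm_of_ext v w : (forall i, v i = w i) ->
  psinorm_of psi v = psinorm_of psi w.
Proof. by move=> h; congr psinorm_of; apply/funext. Qed.

Lemma psinorm_of0 : psinorm_of psi (fun _ => 0) = 0.
Proof. by rewrite /psinorm_of big1 // eqxx. Qed.

Lemma psinorm_ofZ v t : 0 < t ->
  psinorm_of psi (fun i => t * v i) = t * psinorm_of psi v.
Proof.
move=> t0; rewrite /psinorm_of -mulr_sumr.
have tn : t != 0 by rewrite gt_eqF.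
rewrite mulf_eq0 (negbTE tn) /=.
case: eqP => _; first by rewrite mulr0.
rewrite -mulrA; congr (_ * (_ * psi _)).
apply/rowP => i; rewrite !mxE.
by rewrite invfM mulrACA mulfV // mul1r.
Qed.

Lemma psinorm_of_single (B1 : forall i, psi (unitv i) = 1) i (y : R) :
  0 <= y -> psinorm_of psi (fun j => if j == i then y else 0) = y.
Proof.
move=> y0; rewrite /psinorm_of -big_mkcond big_pred1_eq.
case: eqP => [->//|/eqP yn].
rewrite (_ : \row_j _ = unitv i) ?B1 ?mulr1 //.
apply/rowP => j; rewrite !mxE; case: eqP => _.
  by rewrite divff.
by rewrite mul0r.
Qed.
End Psi.
Section HB.
Variables (R : realType) (X : normedModType R) (x0 : X).

Definition Good (G : set (X * R)) : Prop :=
  [/\ G (x0, `|x0|),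
      forall a r s, G (a, r) -> G (a, s) -> r = s,
      forall l a r b s, G (a, r) -> G (b, s) -> G (l *: a + b, l * r + s)
    & forall a r, G (a, r) -> r <= `|a|].

Lemma Good0 {G} : Good G -> G (0, 0).
Proof.
case=> Gx _ Gl _; have := Gl (-1) _ _ _ _ Gx Gx.
by rewrite scaleN1r mulN1r !addNr.
Qed.

Lemma Good_scale {G} l {a r} : Good G -> G (a, r) -> G (l *: a, l * r).
Proof.
move=> gG Gar; have G00 := Good0 gG; case: gG => _ _ Gl _.
have := Gl l _ _ _ _ Gar G00.
by rewrite !addr0.
Qed.

Definition Pset (G : set (X * R)) := G = set0 \/ Good G.

Lemma chain_union (F : set (set (X * R))) :
  F `<=` Pset -> total_on F subset -> Pset (\bigcup_(G in F) G).
Proof.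
move=> FP Ftot.
have memGood G p : F G -> G p -> Good G.
  by move=> FG Gp; case: (FP G FG) => // G0; rewrite G0 in Gp.
have two G1 G2 p q : F G1 -> F G2 -> G1 p -> G2 q ->
    exists G, [/\ F G, G p & G q].
  move=> F1 F2 h1 h2; case: (Ftot _ _ F1 F2) => sub.
    by exists G2; split => //; apply: sub.
  by exists G1; split => //; apply: sub.
case: (pselect (exists p, (\bigcup_(G in F) G) p)) => [[p [G FG Gp]]|nope].
  have gG := memGood _ _ FG Gp.
  right; split.
  - by exists G => //; case: gG.
  - move=> a r s [G1 F1 h1] [G2 F2 h2].
    have [G' [F' h1' h2']] := two _ _ _ _ F1 F2 h1 h2.
    by have [_ fn _ _] := memGood _ _ F' h1'; apply: fn h1' h2'.
  - move=> l a r b s [G1 F1 h1] [G2 F2 h2].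
    have [G' [F' h1' h2']] := two _ _ _ _ F1 F2 h1 h2.
    have [_ _ ln _] := memGood _ _ F' h1'.
    by exists G' => //; apply: ln.
  - move=> a r [G1 F1 h1].
    by have [_ _ _ dm] := memGood _ _ F1 h1; apply: dm.
left; apply/seteqP; split => p // hp; exfalso; apply: nope; by exists p.
Qed.

Lemma hahn_banach_norm : exists f : X -> R,
  is_dual f /\ f x0 = `|x0| /\ forall y, f y <= `|y|.
Proof.
have [A [PA maxA]] := Zorn_bigcup chain_union.
pose G0 := [set p | exists t : R, p = (t *: x0, t * `|x0|)].
have gG0 : Good G0.
  split.
  - by exists 1; rewrite scale1r mul1r.
  - move=> a r s [t [-> ->]] [t' [E ->]].
    have [->|nz] := eqVneq x0 0; first by rewrite normr0 !mulr0.
    have : (t - t') *: x0 = 0 by rewrite scalerBl E subrr.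
    by move/eqP; rewrite scaler_eq0 subr_eq0 (negbTE nz) orbF => /eqP ->.
  - move=> l a r b s [t [-> ->]] [t' [-> ->]].
    by exists (l * t + t'); rewrite scalerDl scalerA mulrDl mulrA.
  - move=> a r [t [-> ->]].
    by rewrite normrZ ler_wpM2r // real_ler_norm // num_real.
have gA : Good A.
  case: PA => // A0; exfalso; apply: (maxA G0); last by right.
  split; first by rewrite A0; apply: sub0set.
  move/(_ (x0, `|x0|)) => h; rewrite A0 in h; apply: h.
  by exists 1; rewrite scale1r mul1r.
have [Ax Afn Alin Adom] := gA.
have full : forall z, exists r, A (z, r).
  move=> z; have [//|nz] := pselect (exists r, A (z, r)); exfalso.
  pose S := [set w | exists a r, A (a, r) /\ w = r - `|a - z|].
  have ubS b s : A (b, s) -> ubound S (`|b + z| - s).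
    move=> Abs w [a [r [Aar ->]]].
    have := Adom _ _ (Alin 1 _ _ _ _ Aar Abs); rewrite scale1r mul1r => h.
    have : `|a + b| <= `|a - z| + `|b + z|.
      rewrite (_ : a + b = (a - z) + (b + z)); first exact: ler_normD.
      by rewrite addrACA addNr addr0.
    lra.
  have hasS : has_sup S.
    split; first by exists (0 - `|0 - z|), 0, 0; split => //; exact: Good0.
    by exists (`|0 + z| - 0); apply: ubS; exact: Good0.
  pose c := sup S.
  have hc1 a r : A (a, r) -> r - `|a - z| <= c.
    by move=> Aar; apply: sup_upper_bound => //; exists a, r.
  have hc2 b s : A (b, s) -> c <= `|b + z| - s.
    by move=> Abs; apply: ge_sup; [exact: hasS.1 | exact: ubS].
  pose B := [set p | exists a r t, A (a, r) /\ p = (a + t *: z, r + t * c)].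
  apply: (maxA B); first split.
  - by move=> [a r] Aar; exists a, r, 0; rewrite scale0r mul0r !addr0.
  - move/(_ (z, c)) => h; apply: nz; exists c; apply: h.
    by exists 0, 0, 1; rewrite scale1r mul1r !add0r; split => //; exact: Good0.
  right; split.
  - by exists x0, `|x0|, 0; rewrite scale0r mul0r !addr0.
  - move=> a r s [a1 [r1 [t1 [A1 [-> ->]]]]] [a2 [r2 [t2 [A2 [Ea ->]]]]].
    have [e|ne] := eqVneq t1 t2.
      move: Ea; rewrite e => /addIr ea; rewrite ea in A1.
      by rewrite (Afn _ _ _ A1 A2).
    exfalso; apply: nz.
    have Ad := Alin (-1) _ _ _ _ A1 A2; rewrite scaleN1r mulN1r in Ad.
    have ez : (t1 - t2) *: z = - a1 + a2.
      apply: (addrI a1); rewrite addrA subrr add0r.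
      by rewrite scalerBl addrA Ea addrK.
    have nz' : t1 - t2 != 0 by rewrite subr_eq0.
    exists ((t1 - t2)^-1 * (- r1 + r2)).
    have := Good_scale ((t1 - t2)^-1) gA Ad.
    by rewrite -ez scalerA mulVf // scale1r.
  - move=> l a r b s [a1 [r1 [t1 [A1 [-> ->]]]]] [a2 [r2 [t2 [A2 [-> ->]]]]].
    exists (l *: a1 + a2), (l * r1 + r2), (l * t1 + t2); split; first exact: Alin.
    congr pair.
      by rewrite scalerDr scalerA scalerDl addrACA.
    by rewrite mulrDr mulrA mulrDl addrACA.
  - move=> a r [a1 [r1 [t [A1 [-> ->]]]]].
    case: (ltgtP t 0) => [tn|tp|->]; last by rewrite scale0r mul0r !addr0; exact: Adom.
    + have u0 : 0 < - t by rewrite oppr_gt0.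
      have := hc1 _ _ (Good_scale (- t)^-1 gA A1).
      rewrite -(ler_pM2l u0) mulrBr mulrA mulfV ?gt_eqF // mul1r => h.
      have e : `|a1 + t *: z| = - t * `|(- t)^-1 *: a1 - z|.
        rewrite -[X in X * _](gtr0_norm u0) -normrZ scalerBr scalerA mulfV ?gt_eqF //.
        by rewrite scale1r scaleNr opprK.
      rewrite e; rewrite mulNr in h; rewrite mulNr; lra.
    + have := hc2 _ _ (Good_scale t^-1 gA A1).
      rewrite -(ler_pM2l tp) mulrBr mulrA mulfV ?gt_eqF // mul1r => h.
      have e : `|a1 + t *: z| = t * `|t^-1 *: a1 + z|.
        rewrite -[X in X * _](gtr0_norm tp) -normrZ scalerDr scalerA mulfV ?gt_eqF //.
        by rewrite scale1r.
      rewrite e; lra.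
have [f Af] := choice full.
have fsub y w : f y - f w <= `|y - w|.
  have := Alin (-1) _ _ _ _ (Af w) (Af y).
  by rewrite scaleN1r mulN1r addrC [- _ + _]addrC; apply: Adom.
exists f; split; last split.
- split; last first.
    move=> x; apply/cvgrPdist_lt => e e0.
    near=> y.
    have h1 := fsub x y; have h2 := fsub y x.
    rewrite distrC in h2.
    have : `|x - y| < e by near: y; apply: cvgr_dist_lt.
    move=> lt; apply: le_lt_trans lt; rewrite ler_norml h1 andbT.
    by rewrite lerNl opprB.
  move=> a u v; apply: (Afn _ _ _ (Af _)); exact: Alin.
- exact: Afn (Af _) Ax.
- by move=> y; apply: Adom.
Unshelve. all: by end_near.
Qed.

End HB.

Theorem theorem4p3 (R : realType) (X : normedModType R) (n : nat)
  (hn : (2 <= n)%N) (psi : 'rV[R]_n -> R) (hpsi : PsiClass psi)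
  (x : 'I_n -> X) (hx : psinorm psi x = 1) :
  subdiff_psinorm psi x =
  [set F | exists (xs : 'I_n -> X -> R) (xi : 'rV[R]_n),
     (forall i, subdiff_norm (x i) (xs i)) /\
     subdiff_psinormR psi (\row_i `|x i|) xi /\
     F = (fun i (y : X) => xi 0 i * xs i y)].
Proof.
have B1 : forall i, psi (unitv i) = 1 by case: hpsi => _ [_ []].
have Nrow : psinormR psi (\row_i `|x i|) = psinorm psi x.
  by apply: psinorm_of_ext => i; rewrite mxE normr_id.
apply/seteqP; split.
- move=> F [Fd Fsub].
  have P0 : psinorm psi (fun _ : 'I_n => (0 : X)) = 0.
    by rewrite /psinorm (@psinorm_of_ext _ _ _ _ (fun _ => 0)) ?psinorm_of0 // => i; rewrite normr0.
  have hsum : \sum_i F i (x i) = psinorm psi x.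
    have h1 := Fsub (fun _ => 0); rewrite P0 in h1.
    have h2 := Fsub (fun i => 2 *: x i).
    have e1 : \sum_i F i (0 - x i) = - \sum_i F i (x i).
      by rewrite -sumrN; apply: eq_bigr => i _; rewrite sub0r linN.
    have e2 : \sum_i F i (2 *: x i - x i) = \sum_i F i (x i).
      apply: eq_bigr => i _; congr (F i _).
      by rewrite -{2}(scale1r (x i)) -scalerBl (_ : 2 - 1 = 1 :> R) ?scale1r //; lra.
    have e3 : psinorm psi (fun i => 2 *: x i) = 2 * psinorm psi x.
      rewrite /psinorm -psinorm_ofZ //; apply: psinorm_of_ext => i.
      by rewrite normrZ ger0_norm.
    rewrite e1 in h1; rewrite e2 e3 in h2; lra.
  have hle y : \sum_i F i (y i) <= psinorm psi y.
    have := Fsub y.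
    rewrite (eq_bigr (fun i => F i (y i) - F i (x i))); last by move=> i _; rewrite linB.
    rewrite sumrB hsum; lra.
  have hF1 i y : F i y <= `|y|.
    have := hle (fun j => if j == i then y else 0).
    rewrite (bigD1 i) //= eqxx big1 ?addr0; last first.
      by move=> j /negbTE ->; rewrite lin0.
    rewrite /psinorm (@psinorm_of_ext _ _ _ _ (fun j => if j == i then `|y| else 0)).
      by rewrite psinorm_of_single.
    by move=> j; case: (j == i) => //; rewrite normr0.
  have [e e1] : exists e : X, `|e| = 1.
    have [[j xj]|none] := pselect (exists j, x j != 0).
      exists (`|x j|^-1 *: x j).
      by rewrite normrZ normfV normr_id mulVf // normr_eq0.
    exfalso; move: hx; rewrite /psinorm (@psinorm_of_ext _ _ _ _ (fun _ => 0)).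
      by rewrite psinorm_of0 => /eqP; rewrite eq_sym oner_eq0.
    move=> i; have [->|xi] := eqVneq (x i) 0; first by rewrite normr0.
    by exfalso; apply: none; exists i.
  pose S i := [set w | exists u : X, `|u| = 1 /\ w = F i u].
  have hasS i : has_sup (S i).
    split; first by exists (F i e), e.
    by exists 1 => w [u [u1 ->]]; rewrite -u1.
  pose c i := sup (S i).
  have cub i u : `|u| = 1 -> F i u <= c i.
    by move=> u1; apply: sup_upper_bound => //; exists u.
  have hc_ub i y : F i y <= c i * `|y|.
    have [->|yn] := eqVneq y 0; first by rewrite lin0 // normr0 mulr0.
    have ny : `|y| != 0 by rewrite normr_eq0.
    have := cub i (`|y|^-1 *: y).
    rewrite normrZ normfV normr_id mulVf // linZ // => /(_ erefl) h.
    have yp : 0 < `|y| by rewrite normr_gt0.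
    rewrite -(ler_pM2l yp) mulrA mulfV // mul1r in h.
    by rewrite mulrC.
  have hc_ge0 i : 0 <= c i.
    have := cub i e e1; have := cub i (- e); rewrite normrN linN // => /(_ e1).
    lra.
  have hN (mu : 'I_n -> R) : (forall i, 0 <= mu i) -> \sum_i c i * mu i <= psinorm_of psi mu.
    move=> mu0; apply/ler_addgt0Pr => eps0 e0.
    pose K := \sum_i mu i + 1.
    have K0 : 0 < K by rewrite /K ltr_wpDl // sumr_ge0.
    pose eps := eps0 / K.
    have eps_pos : 0 < eps by rewrite divr_gt0.
    have epsK : eps * \sum_i mu i <= eps0.
      have eK : eps * K = eps0 by rewrite /eps divfK // gt_eqF.
      rewrite -eK ler_wpM2l ?ltW // /K; lra.
    have hu' i : exists v, `|v| = 1 /\ c i - eps < F i v.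
      by have [w [v [v1 ->]] hw] := sup_adherent eps_pos (hasS i); exists v.
    have [v hv] := choice hu'.
    have := hle (fun i => mu i *: v i).
    rewrite /psinorm (@psinorm_of_ext _ _ _ _ mu); last first.
      by move=> i; rewrite normrZ (proj1 (hv i)) mulr1 ger0_norm.
    have : \sum_i (c i * mu i - eps * mu i) <= \sum_i F i (mu i *: v i).
      apply: ler_sum => i _; rewrite (@linZ _ _ _ (Fd i)); have := proj2 (hv i) => hvi.
      by rewrite -mulrBl mulrC ler_wpM2l // ltW.
    rewrite sumrB -mulr_sumr; lra.
  have hFeq i : F i (x i) = c i * `|x i|.
    have hsum0 : \sum_i (c i * `|x i| - F i (x i)) = 0.
      rewrite sumrB hsum; have := hN (fun i => `|x i|) (fun i => normr_ge0 _).
      rewrite -/(psinorm psi x) -hsum => h1.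
      have : \sum_i F i (x i) <= \sum_i c i * `|x i|.
        by apply: ler_sum => j _; apply: hc_ub.
      lra.
    have nn : forall j : 'I_n, true -> 0 <= c j * `|x j| - F j (x j).
      by move=> j _; rewrite subr_ge0.
    have := psumr_eq0P nn hsum0 (i:=i) isT => h; lra.
  have [hb hbP] := choice (fun x0 : X => @hahn_banach_norm _ _ x0).
  pose xs i := if c i == 0 then hb (x i) else (fun y => (c i)^-1 * F i y).
  exists xs, (\row_i c i); split; [|split].
  + move=> i; rewrite /xs; case: eqP => [c0|/eqP cn0].
      by have [h1 [h2 h3]] := hbP (x i); apply: subdiff_normI.
    have cp : 0 < c i by rewrite lt_def cn0 hc_ge0.
    apply: subdiff_normI; first exact: scal_dual.
      by rewrite hFeq mulKf.
    move=> y; have := hc_ub i y.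
    have ip : 0 < (c i)^-1 by rewrite invr_gt0.
    by rewrite -(ler_pM2l ip) mulrA mulVf ?mul1r // gt_eqF.
  + move=> s; rewrite Nrow.
    rewrite (eq_bigr (fun i => c i * s 0 i - c i * `|x i|)); last first.
      by move=> i _; rewrite !mxE mulrBr.
    rewrite sumrB.
    have -> : \sum_i c i * `|x i| = psinorm psi x.
      by rewrite -hsum; apply: eq_bigr => i _; rewrite hFeq.
    have := hN (fun i => `|s 0 i|) (fun i => normr_ge0 _).
    have : \sum_i c i * s 0 i <= \sum_i c i * `|s 0 i|.
      by apply: ler_sum => i _; rewrite ler_wpM2l // real_ler_norm // num_real.
    rewrite /psinormR; lra.
  + apply/funext => i; apply/funext => y; rewrite mxE /xs.
    case: eqP => [c0|/eqP cn0]; last by rewrite mulrA mulfV ?mul1r.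
    rewrite c0 mul0r; have := hc_ub i y; have := hc_ub i (- y).
    rewrite c0 !mul0r linN //; lra.
- move=> F [xs [xi [hxs [hxi ->]]]]; split.
    by move=> i; apply: scal_dual; have [] := @subdiff_normP _ _ _ _ (hxs i).
  move=> y.
  pose s := \row_i (if 0 <= xi 0 i then `|y i| else - `|y i|).
  have := hxi s; rewrite Nrow.
  have -> : psinormR psi s = psinorm psi y.
    apply: psinorm_of_ext => i; rewrite mxE.
    by case: ifP => _; rewrite ?normrN normr_id.
  move=> h; apply: le_trans h.
  apply: ler_sum => i _.
  have [fx fub fd] := @subdiff_normP _ _ _ _ (hxs i).
  have flb : - `|y i| <= xs i (y i).
    by have := fub (- y i); rewrite linN // normrN; lra.
  have fyb := fub (y i).
  rewrite linB // fx !mxE; case: ifP => h0.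
    by rewrite ler_wpM2l // lerD2r.
  have xn : xi 0 i <= 0 by move/negbT: h0; rewrite -ltNge => /ltW.
  nra.
Qed.
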